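(* Let $(X,d)$ be a compact metric space with a nonatomic Borel probability measure $\mu$, and let $T$ be an invertible ergodic measure-preserving transformation of $(X,\mu)$. If $T$ is uniformly rigid along a strictly increasing sequence $\{n_k\}$ of natural numbers, then $\{n_k\}$ has density zero, i.e. $\lim_{N\to\infty}\frac{1}{N}\#\{k: n_k\le N\}=0$.
   Context: $T$ is uniformly rigid along $\{n_k\}$ if $\sup_{x\in X} d(T^{n_k}x,x)\to 0$ as $k\to\infty$. *)

(* Defs.v *)
From Stdlib Require Import Reals Lra List.
Open Scope R_scope.

Definition is_metric {X : Type} (d : X -> X -> R) : Prop :=
  (forall x y, 0 <= d x y) /\
  (forall x y, d x y = 0 <-> x = y) /\
  (forall x y, d x y = d y x) /\
  (forall x y z, d x z <= d x y + d y z).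

Definition open_set {X : Type} (d : X -> X -> R) (U : X -> Prop) : Prop :=
  forall x, U x -> exists r, 0 < r /\ forall y, d x y < r -> U y.

Definition compact_space {X : Type} (d : X -> X -> R) : Prop :=
  forall (I : Type) (U : I -> X -> Prop),
    (forall i, open_set d (U i)) ->
    (forall x, exists i, U i x) ->
    exists l : list I, forall x, exists i, In i l /\ U i x.

Definition sigma_algebra {X : Type} (S : (X -> Prop) -> Prop) : Prop :=
  S (fun _ => True) /\
  (forall A, S A -> S (fun x => ~ A x)) /\
  (forall A : nat -> X -> Prop, (forall n, S (A n)) -> S (fun x => exists n, A n x)).

Definition borel {X : Type} (d : X -> X -> R) (A : X -> Prop) : Prop :=
  forall S : (X -> Prop) -> Prop, sigma_algebra S ->
    (forall U, open_set d U -> S U) -> S A.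

(** Borel probability measure (set function defined on all predicates, but
    only its values on Borel sets matter). *)
Definition borel_prob_measure {X : Type} (d : X -> X -> R)
    (mu : (X -> Prop) -> R) : Prop :=
  (forall A, borel d A -> 0 <= mu A) /\
  mu (fun _ => True) = 1 /\
  (forall A : nat -> X -> Prop,
     (forall n, borel d (A n)) ->
     (forall n m x, n <> m -> A n x -> A m x -> False) ->
     infinite_sum (fun n => mu (A n)) (mu (fun x => exists n, A n x))).

Definition nonatomic {X : Type} (mu : (X -> Prop) -> R) : Prop :=
  forall x0 : X, mu (fun x => x = x0) = 0.

Definition measurable_map {X : Type} (d : X -> X -> R) (T : X -> X) : Prop :=
  forall A, borel d A -> borel d (fun x => A (T x)).

Definition measure_preserving {X : Type} (d : X -> X -> R)
    (mu : (X -> Prop) -> R) (T : X -> X) : Prop :=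
  measurable_map d T /\ forall A, borel d A -> mu (fun x => A (T x)) = mu A.

Definition invertible_mpt {X : Type} (d : X -> X -> R)
    (mu : (X -> Prop) -> R) (T : X -> X) : Prop :=
  measure_preserving d mu T /\
  exists S : X -> X, (forall x, S (T x) = x) /\ (forall x, T (S x) = x) /\
    measure_preserving d mu S.

Definition ergodic {X : Type} (d : X -> X -> R)
    (mu : (X -> Prop) -> R) (T : X -> X) : Prop :=
  forall A, borel d A -> (forall x, A (T x) <-> A x) -> mu A = 0 \/ mu A = 1.

Definition uniformly_rigid {X : Type} (d : X -> X -> R) (T : X -> X)
    (n : nat -> nat) : Prop :=
  forall eps, 0 < eps -> exists K, forall k, (K <= k)%nat ->
    forall x, d (Nat.iter (n k) T x) x <= eps.

Definition strictly_increasing (n : nat -> nat) : Prop :=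
  forall i j, (i < j)%nat -> (n i < n j)%nat.

(** #{k : n_k <= N}.  For strictly increasing n we have k <= n_k, so only
    indices k <= N can contribute; we count over k = 0..N. *)
Fixpoint count_upto (n : nat -> nat) (N : nat) (K : nat) : nat :=
  match K with
  | O => if Nat.leb (n O) N then 1%nat else 0%nat
  | S K' => (count_upto n N K' + if Nat.leb (n K) N then 1 else 0)%nat
  end.

Definition counting (n : nat -> nat) (N : nat) : nat := count_upto n N N.

Definition density_zero (n : nat -> nat) : Prop :=
  Un_cv (fun N => INR (counting n N) / INR N) 0.

(* Main.v *)
From Stdlib Require Import Reals Lra Lia ZArith List Classical FunctionalExtensionality PropExtensionality IndefiniteDescription.
Require Import Defs.
Open Scope R_scope.

Lemma pred_ext {X : Type} (P Q : X -> Prop) : (forall x, P x <-> Q x) -> P = Q.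
Proof. intros H; apply functional_extensionality; intro x; apply propositional_extensionality; auto. Qed.

Section M.
Context {X : Type} (d : X -> X -> R) (mu : (X -> Prop) -> R).
Hypothesis Hm : borel_prob_measure d mu.

Lemma borel_open U : open_set d U -> borel d U.
Proof. intros HU S HS HO; auto. Qed.
Lemma borel_full : borel d (fun _ => True).
Proof. intros S HS _; apply HS. Qed.
Lemma borel_compl A : borel d A -> borel d (fun x => ~ A x).
Proof. intros HA S HS HO; apply HS; apply HA; auto. Qed.
Lemma borel_cunion (A : nat -> X -> Prop) : (forall n, borel d (A n)) -> borel d (fun x => exists n, A n x).
Proof. intros HA S HS HO; apply HS; intro k; apply HA; auto. Qed.
Lemma borel_ext A B : (forall x, A x <-> B x) -> borel d A -> borel d B.
Proof. intros H HA; rewrite <- (pred_ext A B H); auto. Qed.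
Lemma borel_union A B : borel d A -> borel d B -> borel d (fun x => A x \/ B x).
Proof.
  intros HA HB. apply borel_ext with (fun x => exists k, (fun k => if Nat.eqb k 0 then A else B) k x).
  - intro x; split. intros [k Hk]; destruct (Nat.eqb k 0); auto. intros [H|H]; [exists 0%nat|exists 1%nat]; auto.
  - apply borel_cunion; intro k; destruct (Nat.eqb k 0); auto.
Qed.
Lemma borel_inter A B : borel d A -> borel d B -> borel d (fun x => A x /\ B x).
Proof.
  intros HA HB. apply borel_ext with (fun x => ~ ((fun y => ~ A y) x \/ (fun y => ~ B y) x)).
  - intro x; simpl; tauto.
  - apply borel_compl, borel_union; apply borel_compl; auto.
Qed.

Lemma mu_ext A B : (forall x, A x <-> B x) -> mu A = mu B.
Proof. intro H; rewrite (pred_ext A B H); auto. Qed.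

Lemma borel_empty : borel d (fun _ : X => False).
Proof. apply borel_ext with (fun x => ~ (fun _ => True) x). intro; simpl; tauto. apply borel_compl, borel_full. Qed.

Lemma mu_empty : mu (fun _ => False) = 0.
Proof.
  destruct Hm as [_ [_ Hc]].
  assert (H := Hc (fun _ => fun _ => False) (fun _ => borel_empty) (fun _ _ _ _ h _ => h)). cbv beta in H.
  rewrite (mu_ext (fun x => exists _ : nat, False) (fun _ => False)) in H by (intro; split; [intros [_ h]; auto| tauto]).
  set (m := mu (fun _ => False)) in *.
  destruct (Req_dec m 0) as [E|E]; auto. exfalso.
  destruct (H (Rabs m)) as [N HN]. apply Rabs_pos_lt; auto.
  specialize (HN (S N) ltac:(lia)). unfold R_dist in HN.
  rewrite sum_cte in HN.
  replace (m * INR (S (S N)) - m) with (m * INR (S N)) in HN by (rewrite !S_INR; ring).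
  rewrite Rabs_mult, (Rabs_right (INR (S N))) in HN by (apply Rle_ge, pos_INR).
  assert (1 <= INR (S N)) by (rewrite S_INR; generalize (pos_INR N); lra).
  assert (0 < Rabs m) by (apply Rabs_pos_lt; auto). nra.
Qed.

Lemma mu_add A B : borel d A -> borel d B -> (forall x, A x -> B x -> False) ->
  mu (fun x => A x \/ B x) = mu A + mu B.
Proof.
  intros HA HB Hd. destruct Hm as [_ [_ Hc]].
  set (F := fun k => match k with 0%nat => A | 1%nat => B | _ => fun _ : X => False end).
  assert (HF : forall k, borel d (F k)) by (intros [|[|k]]; simpl; auto using borel_empty).
  assert (HD : forall k m x, k <> m -> F k x -> F m x -> False).
  { intros [|[|k]] [|[|m]] x Hkm; simpl; try tauto; try (intros; eapply Hd; eauto); lia. }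
  assert (H := Hc F HF HD).
  rewrite (mu_ext (fun x => exists k, F k x) (fun x => A x \/ B x)) in H.
  2:{ intro x; split. intros [[|[|k]] Hk]; simpl in Hk; tauto. intros [h|h]; [exists 0%nat|exists 1%nat]; auto. }
  apply (uniqueness_sum (fun k => mu (F k))); auto.
  intros eps He. exists 1%nat. intros k Hk. unfold R_dist.
  replace (sum_f_R0 (fun k => mu (F k)) k) with (mu A + mu B). rewrite Rminus_diag, Rabs_R0; auto.
  induction k. lia. destruct k. simpl. ring. simpl in *. rewrite mu_empty. rewrite <- IHk by lia. ring.
Qed.

Lemma mu_nonneg A : borel d A -> 0 <= mu A.
Proof. destruct Hm as [H _]; auto. Qed.

Lemma mu_mono A B : borel d A -> borel d B -> (forall x, A x -> B x) -> mu A <= mu B.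
Proof.
  intros HA HB H.
  rewrite (mu_ext B (fun x => A x \/ (fun y => B y /\ ~ A y) x)).
  2:{ intro x; simpl; split; [tauto| intros [h|h]; auto; tauto]. }
  rewrite mu_add; auto. generalize (mu_nonneg (fun y => B y /\ ~ A y) (borel_inter _ _ HB (borel_compl _ HA))); lra.
  apply borel_inter; auto; apply borel_compl; auto. simpl; tauto.
Qed.

Lemma mu_sub A B : borel d A -> borel d B -> mu (fun x => A x \/ B x) <= mu A + mu B.
Proof.
  intros HA HB.
  rewrite (mu_ext _ (fun x => A x \/ (fun y => B y /\ ~ A y) x)) by (intro; simpl; tauto).
  rewrite mu_add; auto. apply Rplus_le_compat_l. apply mu_mono; auto.
  apply borel_inter; auto; apply borel_compl; auto. tauto.
  apply borel_inter; auto; apply borel_compl; auto. simpl; tauto.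
Qed.

Lemma mu_full : mu (fun _ => True) = 1.
Proof. destruct Hm as [_ [H _]]; auto. Qed.

Lemma mu_compl A : borel d A -> mu (fun x => ~ A x) = 1 - mu A.
Proof.
  intro HA. rewrite <- mu_full. rewrite (mu_ext (fun _ => True) (fun x => A x \/ ~ A x)) by (intro; tauto).
  rewrite mu_add; auto. ring. apply borel_compl; auto.
Qed.

Fixpoint rsum {J} (f : J -> R) (l : list J) : R :=
  match l with nil => 0 | j :: l' => f j + rsum f l' end.

Lemma borel_list {J} (B : J -> X -> Prop) (l : list J) : (forall j, borel d (B j)) ->
  borel d (fun x => exists j, In j l /\ B j x).
Proof.
  intro HB. induction l as [|a l0 IH0]; simpl.
  - apply borel_ext with (fun _ => False). intro; split; [tauto| intros [_ [[] _]]]. apply borel_empty.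
  - apply borel_ext with (fun x => B a x \/ exists j, In j l0 /\ B j x).
    intro x; split. intros [h|[j [h1 h2]]]; eauto. intros [j [[E|h1] h2]]; [subst j|]; eauto.
    apply borel_union; auto.
Qed.

Lemma mu_list_sub {J} (B : J -> X -> Prop) (l : list J) : (forall j, borel d (B j)) ->
  mu (fun x => exists j, In j l /\ B j x) <= rsum (fun j => mu (B j)) l.
Proof.
  intro HB. induction l as [|j l IH]; simpl.
  - rewrite (mu_ext _ (fun _ => False)). rewrite mu_empty; lra. intro; split; [intros [_ [[] _]] | tauto].
  - rewrite (mu_ext _ (fun x => B j x \/ exists j', In j' l /\ B j' x)).
    eapply Rle_trans. apply mu_sub; auto. apply borel_list; auto. lra.
    intro x; split. intros [j' [[E|h1] h2]]; [subst j'|]; eauto. intros [h|[j' [h1 h2]]]; eauto.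
Qed.

Lemma rsum_le {J} (f : J -> R) l c : (forall j, In j l -> f j <= c) -> rsum f l <= INR (length l) * c.
Proof.
  induction l as [|a l IH]; cbn [rsum length]; intros H. simpl; lra.
  change (length (a :: l)) with (S (length l)). rewrite S_INR. specialize (IH (fun j h => H j (or_intror h))). specialize (H a (or_introl eq_refl)). lra.
Qed.

End M.

Section T.
Context {X : Type} (d : X -> X -> R) (mu : (X -> Prop) -> R).
Hypothesis Hm : borel_prob_measure d mu.
Hypothesis Hd : is_metric d.
Hypothesis Hna : nonatomic mu.
Hypothesis Hc : compact_space d.

Definition ball (c : X) (r : R) := fun y => d c y < r.

Lemma d_sym x y : d x y = d y x. Proof. destruct Hd as [_ [_ [H _]]]; auto. Qed.
Lemma d_tri x y z : d x z <= d x y + d y z. Proof. destruct Hd as [_ [_ [_ H]]]; auto. Qed.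
Lemma d_pos x y : 0 <= d x y. Proof. destruct Hd as [H _]; auto. Qed.
Lemma d_zero x y : d x y = 0 <-> x = y. Proof. destruct Hd as [_ [H _]]; auto. Qed.

Lemma ball_open c r : open_set d (ball c r).
Proof.
  intros y Hy. exists (r - d c y). split. unfold ball in Hy; lra.
  intros w Hw. unfold ball in *. generalize (d_tri c y w); lra.
Qed.
Lemma borel_ball c r : borel d (ball c r).
Proof. apply borel_open, ball_open. Qed.

Lemma borel_single z : borel d (fun x => x = z).
Proof.
  apply borel_ext with (fun x => ~ (fun y => y <> z) x). intro; simpl; split; [apply NNPP| tauto].
  apply borel_compl, borel_open. intros x Hx. exists (d z x). split.
  - destruct (d_pos z x) as [h|h]; auto. symmetry in h; apply d_zero in h. congruence.
  - intros y Hy E; subst y. rewrite d_sym in Hy; lra.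
Qed.

Definition rad (j : nat) := / (INR j + 1).
Lemma rad_pos j : 0 < rad j.
Proof. unfold rad. apply Rinv_0_lt_compat. generalize (pos_INR j); lra. Qed.
Lemma rad_anti j k : (j <= k)%nat -> rad k <= rad j.
Proof.
  intro H. unfold rad. apply Rinv_le_contravar. generalize (pos_INR j); lra.
  apply le_INR in H; lra.
Qed.
Lemma rad_lt j : rad (S j) < rad j.
Proof.
  unfold rad. apply Rinv_lt_contravar. generalize (pos_INR j); rewrite S_INR; nra. rewrite S_INR; lra.
Qed.

Lemma transition (P : nat -> Prop) J : P 0%nat -> ~ P J -> exists j, P j /\ ~ P (S j).
Proof.
  induction J; intros H0 HJ. contradiction.
  destruct (classic (P J)) as [h|h]; eauto.
Qed.

Lemma small_ball_at z c : 0 < c -> exists j, mu (ball z (rad j)) < c.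
Proof.
  intro Hc0. apply NNPP; intro Hn.
  assert (HB : forall j, c <= mu (ball z (rad j))).
  { intro j. apply Rnot_lt_le. intro h; apply Hn; eauto. }
  set (B := fun j => ball z (rad j)).
  set (D := fun j => fun x => B j x /\ ~ B (S j) x).
  assert (Bmono : forall j k x, (j <= k)%nat -> B k x -> B j x).
  { intros j k x H h. unfold B, ball in *. generalize (rad_anti j k H); lra. }
  assert (HDb : forall j, borel d (D j)).
  { intro j. apply borel_inter; [|apply borel_compl]; apply borel_ball. }
  assert (HDd : forall j k x, j <> k -> D j x -> D k x -> False).
  { intros j k x Hjk [h1 h2] [h3 h4].
    destruct (Nat.lt_ge_cases j k) as [l|l].
    - apply h2. apply Bmono with k; auto.
    - assert (k < j)%nat by lia. apply h4. apply Bmono with j; auto. }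
  destruct Hm as [_ [_ Hcs]].
  assert (Hs := Hcs D HDb HDd).
  rewrite (mu_ext mu (fun x => exists j, D j x) (fun x => B 0%nat x /\ x <> z)) in Hs.
  2:{ intro x; split.
      - intros [j [h1 h2]]. split. apply Bmono with j; auto; lia.
        intro E; subst x. apply h2. unfold B, ball. destruct (d_zero z z) as [_ h]. rewrite h; auto. apply rad_pos.
      - intros [h1 h2]. assert (0 < d z x).
        { destruct (d_pos z x) as [h|h]; auto. symmetry in h; apply d_zero in h; congruence. }
        destruct (archimed (/ d z x)) as [Ha _].
        assert (HJ : ~ B (Z.to_nat (up (/ d z x))) x).
        { unfold B, ball, rad. intro h.
          assert (0 <= up (/ d z x))%Z. { apply le_IZR. generalize (Rinv_0_lt_compat _ H); lra. }
          rewrite INR_IZR_INZ, Z2Nat.id in h by auto.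
          set (u := IZR (up (/ d z x))) in *.
          assert (Hu : 0 < u + 1) by (generalize (Rinv_0_lt_compat _ H); lra).
          assert (g2 : d z x * (u + 1) < 1).
          { apply Rmult_lt_compat_r with (r := u + 1) in h; auto. rewrite Rinv_l in h; lra. }
          assert (g3 : 1 < d z x * u).
          { apply Rmult_lt_compat_l with (r := d z x) in Ha; auto. rewrite Rinv_r in Ha; lra. }
          nra. }
        destruct (transition (fun j => B j x) _ h1 HJ) as [j Hj]. exists j; exact Hj. }
  assert (Hpart : forall J, sum_f_R0 (fun j => mu (D j)) J = mu (B 0%nat) - mu (B (S J))).
  { assert (Hstep : forall j, mu (B j) = mu (D j) + mu (B (S j))).
    { intro j. rewrite <- (mu_add d mu Hm); auto. apply mu_ext. intro x; unfold D; split.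
      - intro h; destruct (classic (B (S j) x)); tauto.
      - intros [[h _]|h]; auto. apply Bmono with (S j); auto.
      - apply borel_ball.
      - intros x [_ h] h'; auto. }
    induction J; simpl. rewrite (Hstep 0%nat); ring. rewrite IHJ, (Hstep (S J)); ring. }
  assert (Hz : mu (B 0%nat) = mu (fun x => B 0%nat x /\ x <> z)).
  { rewrite (mu_ext mu (B 0%nat) (fun x => (fun y => B 0%nat y /\ y <> z) x \/ (fun y => y = z) x)).
    rewrite (mu_add d mu Hm); auto. rewrite Hna. ring.
    apply borel_inter. apply borel_ball. apply borel_compl, borel_single.
    apply borel_single. intros x [_ h] h'; auto.
    intro x; split. intro h; destruct (classic (x = z)); auto. intros [[h _]| ->]. auto.
    unfold B, ball. destruct (d_zero z z) as [_ h]. rewrite h; auto. apply rad_pos. }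
  destruct (Hs c Hc0) as [N HN]. specialize (HN N (le_n N)). unfold R_dist in HN.
  rewrite Hpart, <- Hz in HN. specialize (HB (S N)). unfold B in HN.
  rewrite Rabs_left1 in HN; lra.
Qed.


Lemma accum (xs : nat -> X) : exists z, forall r, 0 < r -> forall K, exists k, (K <= k)%nat /\ d z (xs k) < r.
Proof.
  apply NNPP; intro Hn.
  assert (Hall : forall z, exists r, 0 < r /\ exists K, forall k, (K <= k)%nat -> r <= d z (xs k)).
  { intro z. apply NNPP; intro h. apply Hn. exists z. intros r Hr K. apply NNPP; intro h2.
    apply h. exists r. split; auto. exists K. intros k Hk. apply Rnot_lt_le. intro h3. apply h2; eauto. }
  set (I := {p : X * R * nat | 0 < snd (fst p) /\ forall k, (snd p <= k)%nat -> snd (fst p) <= d (fst (fst p)) (xs k)}).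
  set (U := fun i : I => ball (fst (fst (proj1_sig i))) (snd (fst (proj1_sig i)))).
  destruct (Hc I U) as [l Hl].
  - intro i; apply ball_open.
  - intro x. destruct (Hall x) as [r [Hr [K HK]]].
    exists (exist _ (x, r, K) (conj Hr HK)). unfold U, ball; simpl. destruct (d_zero x x) as [_ h]. rewrite h; auto.
  - set (Km := fold_right (fun i m => Nat.max (snd (proj1_sig i)) m) 0%nat l).
    assert (HKm : forall i, In i l -> (snd (proj1_sig i) <= Km)%nat).
    { unfold Km; clear. induction l as [|a l IH]; simpl; intros i Hi. contradiction.
      destruct Hi as [<-|Hi]. lia. specialize (IH i Hi). lia. }
    destruct (Hl (xs Km)) as [i [Hi HU]]. specialize (HKm _ Hi). clear Hi.
    destruct i as [[[z r] K] [Hr HK]]. unfold U, ball in HU; simpl in *.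
    specialize (HK Km HKm). lra.
Qed.

Lemma small_balls c : 0 < c -> exists eta, 0 < eta /\ forall x, mu (ball x eta) < c.
Proof.
  intro Hc0. apply NNPP; intro Hn.
  assert (H : forall j, exists x, c <= mu (ball x (rad j))).
  { intro j. apply NNPP; intro h. apply Hn. exists (rad j). split. apply rad_pos. intro x.
    apply Rnot_le_lt. intro h2; apply h; eauto. }
  set (xs := fun j => proj1_sig (constructive_indefinite_description _ (H j))).
  assert (Hxs : forall j, c <= mu (ball (xs j) (rad j))).
  { intro j. unfold xs. destruct (constructive_indefinite_description _ (H j)); auto. }
  destruct (accum xs) as [z Hz].
  destruct (small_ball_at z c Hc0) as [j Hj].
  destruct (Hz (rad j / 2) ltac:(generalize (rad_pos j); lra) (S (2 * j))) as [k [Hk Hdk]].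
  assert (Hrk : rad k <= rad j / 2).
  { eapply Rle_trans. apply rad_anti; eauto. unfold rad. rewrite S_INR, mult_INR. simpl (INR 2).
    assert (0 < INR j + 1) by (generalize (pos_INR j); lra).
    replace ((1+1) * INR j + 1 + 1) with (2 * (INR j + 1)) by ring. rewrite Rinv_mult. unfold Rdiv. rewrite Rmult_comm. lra. }
  assert (mu (ball (xs k) (rad k)) <= mu (ball z (rad j))).
  { apply (mu_mono d mu Hm); [apply borel_ball|apply borel_ball|]. intros y Hy. unfold ball in *.
    generalize (d_tri z (xs k) y); lra. }
  specialize (Hxs k). lra.
Qed.


Lemma separated (r : nat) : exists gam, 0 < gam /\ exists A : nat -> X -> Prop,
  (forall i, (i < r)%nat -> borel d (A i) /\ 0 < mu (A i)) /\
  (forall i j u v, (i < r)%nat -> (j < r)%nat -> i <> j -> A i u -> A j v -> gam < d u v).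
Proof.
  set (c := / (INR r + 1)).
  assert (Hc0 : 0 < c) by (unfold c; apply Rinv_0_lt_compat; generalize (pos_INR r); lra).
  destruct (small_balls c Hc0) as [eta [Heta Hsm]].
  assert (Hind : forall k, (k <= r)%nat -> exists (A : nat -> X -> Prop) (cs : nat -> X),
    (forall i, (i < k)%nat -> borel d (A i) /\ 0 < mu (A i) /\ forall u, A i u -> d (cs i) u < eta / 4) /\
    (forall i j v, (i < j)%nat -> (j < k)%nat -> A j v -> eta <= d (cs i) v)).
  { induction k as [|k IH]; intro Hk.
    - destruct (classic (exists x0 : X, True)) as [[x0 _]|hne].
      2:{ exfalso. assert (h := mu_full d mu Hm). rewrite (mu_ext mu _ (fun _ => False)) in h.
          rewrite (mu_empty d mu Hm) in h; lra. intro x; split; auto. intros _; apply hne; eauto. }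
      exists (fun _ _ => False), (fun _ => x0).
      split; intros; lia.
    - destruct (IH ltac:(lia)) as [A [cs [H1 H2]]].
      set (Y := fun y => ~ exists i, In i (seq 0 k) /\ ball (cs i) eta y).
      assert (HYb : borel d Y) by (apply borel_compl, borel_list; intro; apply borel_ball).
      assert (HY : 0 < mu Y).
      { unfold Y. rewrite (mu_compl d mu Hm) by (apply borel_list; intro; apply borel_ball).
        assert (h := mu_list_sub d mu Hm (fun i => ball (cs i) eta) (seq 0 k) (fun i => borel_ball _ _)).
        assert (h2 := rsum_le (fun i => mu (ball (cs i) eta)) (seq 0 k) c (fun i _ => Rlt_le _ _ (Hsm (cs i)))).
        rewrite length_seq in h2.
        assert (INR k * c < 1).
        { unfold c. apply le_INR in Hk. rewrite S_INR in Hk.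
          assert (0 < INR r + 1) by (generalize (pos_INR r); lra).
          apply Rmult_lt_reg_r with (INR r + 1); auto. rewrite Rmult_assoc, Rinv_l by lra. lra. }
        lra. }
      destruct (Hc X (fun z => ball z (eta / 4))) as [l Hl].
      + intro; apply ball_open.
      + intro x. exists x. unfold ball. destruct (d_zero x x) as [_ h]. rewrite h; auto. lra.
      + assert (Hex : exists z, In z l /\ 0 < mu (fun y => ball z (eta / 4) y /\ Y y)).
        { apply NNPP; intro hn.
          assert (hb : forall z, borel d (fun y => ball z (eta / 4) y /\ Y y)) by (intro; apply borel_inter; auto; apply borel_ball).
          assert (h := mu_list_sub d mu Hm (fun z => fun y => ball z (eta / 4) y /\ Y y) l hb).
          assert (h2 := rsum_le (fun z => mu (fun y => ball z (eta / 4) y /\ Y y)) l 0).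
          assert (h3 : mu Y <= mu (fun x => exists z, In z l /\ ball z (eta / 4) x /\ Y x)).
          { apply (mu_mono d mu Hm); auto. apply (borel_list d (fun z => fun y => ball z (eta / 4) y /\ Y y)); auto.
            intros x hx. destruct (Hl x) as [z [hz1 hz2]]. eauto. }
          assert (INR (length l) * 0 = 0) by ring.
          assert (rsum (fun z => mu (fun y => ball z (eta / 4) y /\ Y y)) l <= 0).
          { rewrite <- H. apply h2. intros z hz. apply Rnot_lt_le. intro; apply hn; eauto. }
          lra. }
        destruct Hex as [z [_ Hz]].
        exists (fun i => if Nat.eqb i k then (fun y => ball z (eta / 4) y /\ Y y) else A i).
        exists (fun i => if Nat.eqb i k then z else cs i).
        split.
        * intros i Hi. destruct (Nat.eqb_spec i k).
          -- split. apply borel_inter; auto; apply borel_ball. split; auto. intros u [hu _]; exact hu.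
          -- apply H1; lia.
        * intros i j v Hij Hjk. destruct (Nat.eqb_spec i k); [lia|]. destruct (Nat.eqb_spec j k).
          -- intros [_ hY]. apply Rnot_lt_le. intro h. apply hY. exists i. split; auto. apply in_seq; lia.
          -- apply H2; lia. }
  destruct (Hind r (le_n r)) as [A [cs [H1 H2]]].
  exists (eta / 2). split. lra. exists A. split. intros i Hi; destruct (H1 i Hi) as [a [b _]]; auto.
  assert (Hlt : forall i j u v, (i < j)%nat -> (j < r)%nat -> A i u -> A j v -> eta / 2 < d u v).
  { intros i j u v Hij Hj hu hv. destruct (H1 i ltac:(lia)) as [_ [_ h]]. specialize (h u hu).
    specialize (H2 i j v Hij Hj hv). generalize (d_tri (cs i) u v). lra. }
  intros i j u v Hi Hj Hij hu hv. destruct (Nat.lt_ge_cases i j).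
  - eapply Hlt; eauto.
  - rewrite d_sym. apply (Hlt j i v u); auto. lia.
Qed.

End T.

Lemma NoDup_flat {I B} (f : I -> list B) (l : list I) : NoDup l -> (forall i, In i l -> NoDup (f i)) ->
  (forall i j x, In i l -> In j l -> i <> j -> In x (f i) -> In x (f j) -> False) -> NoDup (flat_map f l).
Proof.
  induction l as [|a l IH]; simpl; intros Hl H1 H2. constructor.
  inversion Hl; subst. apply NoDup_app.
  - auto.
  - apply IH; auto. intros i j x hi hj; apply H2; auto.
  - intros y hy hy2. apply in_flat_map in hy2. destruct hy2 as [j [hj hyj]].
  apply (H2 a j y); auto. intro E; subst; auto.
Qed.

Lemma count_upto_le n N M : (count_upto n N M <= S M)%nat.
Proof. induction M; simpl. destruct (Nat.leb (n 0%nat) N); lia. destruct (Nat.leb (n (S M)) N); lia. Qed.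

Lemma si_mono n : strictly_increasing n -> forall i j, (i <= j)%nat -> (n i <= n j)%nat.
Proof. intros H i j h. destruct (Nat.eq_dec i j). subst; lia. specialize (H i j ltac:(lia)); lia. Qed.

Lemma count_prefix n N M : strictly_increasing n -> forall k, (k < count_upto n N M)%nat -> (n k <= N)%nat.
Proof.
  intro Hs. induction M; simpl; intros k Hk.
  - destruct (Nat.leb_spec (n 0%nat) N); [|lia]. replace k with 0%nat by lia; auto.
  - destruct (Nat.leb_spec (n (S M)) N).
    + destruct (Nat.lt_ge_cases k (count_upto n N M)); auto.
      assert (k <= S M)%nat by (generalize (count_upto_le n N M); lia).
      generalize (si_mono n Hs k (S M) H1); lia.
    + apply IHM; lia.
Qed.

Lemma comb (n : nat -> nat) (p : nat -> nat) r K N P c :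
  strictly_increasing n -> (forall k, (k < c)%nat -> (n k <= N)%nat) -> (forall i, (i < r)%nat -> (p i <= P)%nat) ->
  (forall i j k1 k2, (i < r)%nat -> (j < r)%nat -> i <> j -> (K <= k1)%nat -> (K <= k2)%nat -> n k1 + p i <> n k2 + p j)%nat ->
  (r * (c - K) <= N + P + 1)%nat.
Proof.
  intros Hs Hc Hp Hd.
  set (f := fun i => map (fun k => n k + p i)%nat (seq K (c - K))).
  set (L := flat_map f (seq 0 r)).
  assert (HL : length L = (r * (c - K))%nat).
  { unfold L. rewrite (flat_map_constant_length (c := (c - K)%nat)). rewrite length_seq; auto.
    intros; unfold f; rewrite length_map, length_seq; auto. }
  rewrite <- HL. replace (N + P + 1)%nat with (length (seq 0 (N + P + 1))) by apply length_seq.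
  apply NoDup_incl_length.
  - apply NoDup_flat. apply seq_NoDup.
    + intros i _. unfold f. apply NoDup_map_NoDup_ForallPairs; [|apply seq_NoDup].
      intros a b _ _ E. destruct (Nat.lt_total a b) as [h|[h|h]]; auto; apply Hs in h; lia.
    + intros i j x hi hj hij hx1 hx2. unfold f in *. apply in_map_iff in hx1, hx2.
      destruct hx1 as [k1 [E1 h1]]. destruct hx2 as [k2 [E2 h2]]. apply in_seq in h1, h2, hi, hj.
      apply (Hd i j k1 k2); lia.
  - intros x hx. unfold L in hx. apply in_flat_map in hx. destruct hx as [i [hi hx]]. unfold f in hx.
    apply in_map_iff in hx. destruct hx as [k [E hk]]. apply in_seq in hk, hi. apply in_seq.
    specialize (Hc k ltac:(lia)). specialize (Hp i ltac:(lia)). lia.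
Qed.

Lemma iter_borel {X} (d : X -> X -> R) f : measurable_map d f -> forall a A, borel d A -> borel d (fun y => A (Nat.iter a f y)).
Proof.
  intros Hf a. induction a; intros A HA; simpl. auto.
  apply (IHa (fun u => A (f u))). apply Hf; auto.
Qed.

Lemma shift_iter {X} (T Si : X -> X) : (forall x, T (Si x) = x) -> forall c b x, Nat.iter c T (Nat.iter (c + b) Si x) = Nat.iter b Si x.
Proof.
  intros H c. induction c; intros b x; auto.
  rewrite Nat.iter_succ_r. simpl (S c + b)%nat. rewrite Nat.iter_succ, H. auto.
Qed.

Lemma fin_choice (P : nat -> nat -> nat -> Prop) r : (forall i, (i < r)%nat -> exists a b, P i a b) ->
  exists fa fb, forall i, (i < r)%nat -> P i (fa i) (fb i).
Proof.
  induction r; intros H. exists (fun _ => 0%nat), (fun _ => 0%nat); intros; lia.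
  destruct IHr as [fa [fb Hf]]. intros; apply H; lia.
  destruct (H r (Nat.lt_succ_diag_r r)) as [a [b Hab]].
  exists (fun i => if Nat.eqb i r then a else fa i), (fun i => if Nat.eqb i r then b else fb i).
  intros i Hi. destruct (Nat.eqb_spec i r). subst; auto. apply Hf; lia.
Qed.

Fixpoint fmax (g : nat -> nat) (r : nat) : nat :=
  match r with O => O | S r' => Nat.max (g r') (fmax g r') end.
Lemma fmax_ge g r i : (i < r)%nat -> (g i <= fmax g r)%nat.
Proof. induction r; simpl; intros H. lia. destruct (Nat.eq_dec i r). subst; lia. specialize (IHr ltac:(lia)); lia. Qed.

Theorem proposition4p1 (X : Type) (d : X -> X -> R) (mu : (X -> Prop) -> R)
  (T : X -> X) (n : nat -> nat) :
  is_metric d -> compact_space d ->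
  borel_prob_measure d mu -> nonatomic mu ->
  invertible_mpt d mu T -> ergodic d mu T ->
  strictly_increasing n -> uniformly_rigid d T n ->
  density_zero n.
Proof.
  intros Hd Hc Hm Hna [[HTm _] [Si [HST [HTS [HSm _]]]]] Herg Hs Hrig.
  apply NNPP; intro Hnd.
  assert (Hdel : exists del, 0 < del /\ forall N0, exists N, (N0 <= N)%nat /\ del * INR N <= INR (counting n N)).
  { apply NNPP; intro h. apply Hnd. intros eps He. apply NNPP; intro h2. apply h. exists eps. split; auto.
    intro N0. apply NNPP; intro h3. apply h2. exists (Datatypes.S N0). intros N HN. unfold R_dist. rewrite Rminus_0_r.
    apply Rnot_le_lt; intro h4. apply h3. exists N. split. lia.
    assert (0 < INR N) by (apply lt_0_INR; lia).
    rewrite Rabs_right in h4. 2:{ apply Rle_ge; unfold Rdiv; apply Rmult_le_pos. apply pos_INR. left; apply Rinv_0_lt_compat; auto. }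
    unfold Rdiv in h4. apply Rmult_le_compat_r with (r := INR N) in h4; [|lra].
    rewrite Rmult_assoc, Rinv_l, Rmult_1_r in h4; lra. }
  destruct Hdel as [del [Hdel HN]].
  set (r := Datatypes.S (Z.to_nat (up (2 / del)))).
  assert (Hr : 2 <= INR r * del).
  { unfold r. rewrite S_INR, INR_IZR_INZ. destruct (archimed (2 / del)) as [Ha _].
    assert (0 < 2 / del) by (unfold Rdiv; apply Rmult_lt_0_compat; [lra|apply Rinv_0_lt_compat; auto]).
    rewrite Z2Nat.id. 2:{ apply le_IZR. lra. }
    assert (2 / del * del = 2) by (field; lra). nra. }
  destruct (separated d mu Hm Hd Hna Hc r) as [gam [Hgam [A [HA Hsep]]]].
  destruct (Hrig (gam / 2) ltac:(lra)) as [K HK].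
  set (A2 := fun i => if Nat.ltb i r then A i else (fun _ : X => True)).
  assert (HA2 : forall i, borel d (A2 i)).
  { intro i. unfold A2. destruct (Nat.ltb_spec i r). apply HA; auto. apply borel_full. }
  set (W := fun i y => exists a b, A2 i (Nat.iter a T (Nat.iter b Si y))).
  assert (HWb : forall i, borel d (W i)).
  { intro i. apply borel_cunion. intro a. apply borel_cunion. intro b.
    apply (iter_borel d Si HSm b (fun u => A2 i (Nat.iter a T u))). apply iter_borel; auto. }
  assert (HW : forall i, (i < r)%nat -> mu (W i) = 1).
  { intros i Hi. destruct (HA i Hi) as [HAb HAp].
    assert (E2 : A2 i = A i) by (unfold A2; destruct (Nat.ltb_spec i r); auto; lia).
    destruct (Herg (W i) (HWb i)) as [h|h]; auto.
    - intro y; split.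
      + intros [a [b hab]]. destruct b as [|b].
        * exists (Datatypes.S a), 0%nat. change (A2 i (Nat.iter (Datatypes.S a) T y)). rewrite Nat.iter_succ_r. exact hab.
        * exists a, b. rewrite Nat.iter_succ_r, HST in hab. auto.
      + intros [a [b hab]]. exists a, (Datatypes.S b). rewrite Nat.iter_succ_r, HST. auto.
    - exfalso. assert (mu (A i) <= mu (W i)).
      { apply (mu_mono d mu Hm); auto. intros y hy. exists 0%nat, 0%nat. simpl. rewrite E2; auto. }
      lra. }
  assert (Hx : exists x, forall i, (i < r)%nat -> W i x).
  { apply NNPP; intro hn.
    assert (h := mu_list_sub d mu Hm (fun i y => ~ W i y) (seq 0 r) (fun i => borel_compl d _ (HWb i))).
    assert (h2 := rsum_le (fun i => mu (fun y => ~ W i y)) (seq 0 r) 0).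
    assert (h3 : rsum (fun i => mu (fun y => ~ W i y)) (seq 0 r) <= 0).
    { eapply Rle_trans. apply h2. intros i hi. apply in_seq in hi.
      rewrite (mu_compl d mu Hm) by auto. rewrite HW by lia. lra. lra. }
    rewrite (mu_ext mu _ (fun _ => True)) in h. rewrite (mu_full d mu Hm) in h. lra.
    intro y; split; auto. intros _. apply NNPP; intro h4. apply hn. exists y. intros i Hi.
    apply NNPP; intro h5. apply h4. exists i. split; auto. apply in_seq; lia. }
  destruct Hx as [x Hx].
  destruct (fin_choice (fun i a b => A i (Nat.iter a T (Nat.iter b Si x))) r) as [fa [fb Hf]].
  { intros i Hi. destruct (Hx i Hi) as [a [b h]]. exists a, b. unfold A2 in h.
    destruct (Nat.ltb_spec i r); auto; lia. }
  set (Dm := fmax fb r).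
  set (z := Nat.iter Dm Si x).
  set (p := fun i => (fa i + (Dm - fb i))%nat).
  assert (Hp : forall i, (i < r)%nat -> A i (Nat.iter (p i) T z)).
  { intros i Hi. specialize (Hf i Hi). unfold p, z. rewrite Nat.iter_add.
    assert (E : Nat.iter (Dm - fb i) T (Nat.iter Dm Si x) = Nat.iter (fb i) Si x).
    { rewrite <- (shift_iter T Si HTS (Dm - fb i) (fb i) x). do 2 f_equal.
      generalize (fmax_ge fb r i Hi); unfold Dm; lia. }
    rewrite E. exact Hf. }
  assert (Hdisj : forall i j k1 k2, (i < r)%nat -> (j < r)%nat -> i <> j -> (K <= k1)%nat -> (K <= k2)%nat ->
     (n k1 + p i <> n k2 + p j)%nat).
  { intros i j k1 k2 Hi Hj Hij Hk1 Hk2 E.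
    assert (h1 := HK k1 Hk1 (Nat.iter (p i) T z)). assert (h2 := HK k2 Hk2 (Nat.iter (p j) T z)).
    rewrite <- Nat.iter_add in h1, h2. rewrite E in h1.
    assert (h3 := Hsep i j _ _ Hi Hj Hij (Hp i Hi) (Hp j Hj)).
    assert (h4 := d_tri d Hd (Nat.iter (p i) T z) (Nat.iter (n k2 + p j) T z) (Nat.iter (p j) T z)).
    rewrite (d_sym d Hd (Nat.iter (p i) T z) (Nat.iter (n k2 + p j) T z)) in h4. lra. }
  set (P := fmax p r).
  destruct (HN (r * K + P + 2)%nat) as [N [HN0 HcN]].
  assert (Hcomb := comb n p r K N P (counting n N) Hs (count_prefix n N N Hs) (fun i Hi => fmax_ge p r i Hi) Hdisj).
  set (c := counting n N) in *. clearbody r.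
  apply le_INR in Hcomb, HN0. rewrite !plus_INR, mult_INR in Hcomb, HN0.
  assert (Hck : INR c - INR K <= INR (c - K)).
  { destruct (Nat.le_gt_cases K c) as [hk|hk]. rewrite minus_INR by auto; lra. replace (c - K)%nat with 0%nat by lia. apply lt_INR in hk. simpl; lra. }
  assert (0 <= INR r) by apply pos_INR.
  assert (INR r * (INR c - INR K) <= INR r * INR (c - K)) by (apply Rmult_le_compat_l; auto).
  assert (INR r * del * INR N <= INR r * INR c) by (rewrite Rmult_assoc; apply Rmult_le_compat_l; auto).
  assert (0 <= INR N) by apply pos_INR.
  assert (2 * INR N <= INR r * del * INR N) by (apply Rmult_le_compat_r; auto).
  replace (INR 2) with 2 in HN0 by (simpl; lra). replace (INR 1) with 1 in Hcomb by reflexivity. rewrite Rmult_minus_distr_l in H0. lra.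
Qed.
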